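(* Let $(E,\tau)$ be a locally solid vector lattice, where $\tau$ is a uo-Lebesgue topology. Suppose that $C_\tau=E$ or, equivalently, that $E$ has the countable sup property (this holds in particular when $C_\tau$ has a countable order basis, or when $\tau$ is metrisable). Then: (1) every $\tau$-convergent net in $E$ has an embedded sequence that is uo-convergent as well as $\tau$-convergent to the same limit; (2) a sequence in $E$ is $\tau$-convergent to $x\in E$ if and only if every subsequence has a further subsequence that is uo-convergent to $x$.
   Context: All vector lattices are real and Archimedean; linear topologies are Hausdorff. A locally solid topology on a vector lattice is a linear topology such that zero has a neighbourhood basis of solid sets. A net $(x_\alpha)$ order converges to $x$ if there is a net $y_\beta\downarrow0$ such that for each $\beta_0$ eventually $|x_\alpha-x|\leq y_{\beta_0}$; it uo-converges to $x$ if $|x_\alpha-x|\wedge|y|$ order converges to $0$ for every $y\in E$. A uo-Lebesgue topology is a locally solid topology in which every uo-convergent net converges topologically to the same limit. A sequence $(V_n)$ of neighbourhoods of zero is normal if $V_{n+1}+V_{n+1}\subseteq V_n$; the carrier $C_\tau$ is the union of the disjoint complements $N^{\mathrm d}$ where $N=\bigcap_nV_n$ ranges over intersections of normal sequences of solid $\tau$-neighbourhoods of zero. An order basis of a vector lattice $G$ is a non-empty $A\subseteq G$ with $A^{\mathrm d}=\{0\}$. $E$ has the countable sup property if every subset with a supremum contains an at most countable subset with the same supremum. Embedded sequence: given a net $(x_\alpha)_{\alpha\in A}$, a sequence $(x_{\alpha_n})_{n\geq1}$ with $\alpha_1\leq\alpha_2\leq\dotsb$, strictly increasing when $A$ has no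 largest element. *)

(* Defs.v *)
From HB Require Import structures.
From mathcomp Require Import all_boot all_order all_algebra.
From mathcomp Require Import all_classical all_reals all_analysis.
Set Implicit Arguments. Unset Strict Implicit. Unset Printing Implicit Defensive.
Import Order.TTheory GRing.Theory Num.Theory.
Local Open Scope classical_set_scope.
Local Open Scope ring_scope.

Section VL.
Variables (R : realType) (E : topologicalLmodType R).
Variables (le : E -> E -> Prop) (join : E -> E -> E).

Record vector_lattice : Prop := {
  vl_refl : forall x, le x x;
  vl_trans : forall x y z, le x y -> le y z -> le x z;
  vl_antisym : forall x y, le x y -> le y x -> x = y;
  vl_add : forall x y z, le x y -> le (x + z) (y + z);
  vl_scale : forall (a : R) x y, 0 <= a -> le x y -> le (a *: x) (a *: y);
  vl_join_ubl : forall x y, le x (join x y);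
  vl_join_ubr : forall x y, le y (join x y);
  vl_join_lub : forall x y z, le x z -> le y z -> le (join x y) z;
  vl_archimedean : forall x y, le 0 x -> (forall n : nat, le (n%:R *: x) y) -> x = 0
}.

Definition meet (x y : E) : E := - join (- x) (- y).
Definition absv (x : E) : E := join x (- x).

Definition is_sup (S : set E) (s : E) : Prop :=
  (forall y, S y -> le y s) /\ (forall u, (forall y, S y -> le y u) -> le s u).
Definition is_inf (S : set E) (s : E) : Prop :=
  (forall y, S y -> le s y) /\ (forall u, (forall y, S y -> le u y) -> le u s).

Definition directed (A : Type) (ra : A -> A -> Prop) : Prop :=
  (exists a : A, True) /\ (forall a, ra a a) /\
  (forall a b c, ra a b -> ra b c -> ra a c) /\
  (forall a b, exists c, ra a c /\ ra b c).

Definition natle (m n : nat) : Prop := (m <= n)%N.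

Definition tconv (A : Type) (ra : A -> A -> Prop) (x : A -> E) (x0 : E) : Prop :=
  forall U, nbhs x0 U -> exists a0, forall a, ra a0 a -> U (x a).

Definition oconv (A : Type) (ra : A -> A -> Prop) (x : A -> E) (x0 : E) : Prop :=
  exists (B : Type) (rb : B -> B -> Prop) (y : B -> E),
    directed rb /\ (forall b1 b2, rb b1 b2 -> le (y b2) (y b1)) /\
    is_inf (range y) 0 /\
    forall b0, exists a0, forall a, ra a0 a -> le (absv (x a - x0)) (y b0).

Definition uoconv (A : Type) (ra : A -> A -> Prop) (x : A -> E) (x0 : E) : Prop :=
  forall w : E, oconv ra (fun a => meet (absv (x a - x0)) (absv w)) 0.

Definition solid (V : set E) : Prop :=
  forall x y, V y -> le (absv x) (absv y) -> V x.

Definition locally_solid : Prop :=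
  forall U, nbhs (0 : E) U -> exists V, nbhs (0 : E) V /\ solid V /\ V `<=` U.

Definition uo_Lebesgue : Prop :=
  locally_solid /\
  forall (A : Type) (ra : A -> A -> Prop) (x : A -> E) (x0 : E),
    directed ra -> uoconv ra x x0 -> tconv ra x x0.

Definition normal_seq (V : nat -> set E) : Prop :=
  forall n u v, V n.+1 u -> V n.+1 v -> V n (u + v).

Definition disj_compl (N : set E) : set E :=
  [set x | forall y, N y -> meet (absv x) (absv y) = 0].

Definition carrier : set E :=
  [set x | exists V : nat -> set E,
     (forall n, nbhs (0 : E) (V n) /\ solid (V n)) /\ normal_seq V /\
     disj_compl (\bigcap_n V n) x].

Definition countable_sup_property : Prop :=
  forall (S : set E) (s : E), is_sup S s ->
    exists T, T `<=` S /\ countable T /\ is_sup T s.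

Definition embedded (A : Type) (ra : A -> A -> Prop) (s : nat -> A) : Prop :=
  (forall n, ra (s n) (s n.+1)) /\
  ((~ exists a, forall b, ra b a) -> forall n, ~ ra (s n.+1) (s n)).

End VL.

Definition strict_incr (phi : nat -> nat) : Prop := forall n, (phi n < phi n.+1)%N.

(* Main.v *)
Set Warnings "-all".
From Stdlib Require Import Classical_Prop.
Require Import Defs.
From HB Require Import structures.
From mathcomp Require Import all_boot all_order all_algebra.
From mathcomp Require Import all_classical all_reals all_analysis.
Import Order.TTheory GRing.Theory Num.Theory.
Local Open Scope classical_set_scope.
Local Open Scope ring_scope.
Set Implicit Arguments. Unset Strict Implicit. Unset Printing Implicit Defensive.
Section Lat.
Variables (R : realType) (E : topologicalLmodType R).
Variables (le : E -> E -> Prop) (join : E -> E -> E).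
Hypothesis VL : vector_lattice le join.
Local Notation "x ≼ y" := (le x y) (at level 70).
Local Notation meet := (meet join).
Local Notation absv := (absv join).

Lemma Lrefl x : x ≼ x. Proof. exact: (@vl_refl R E le join VL x). Qed.
Lemma Ltr x y z : x ≼ y -> y ≼ z -> x ≼ z. Proof. exact: (@vl_trans _ _ _ _ VL x y z). Qed.
Lemma Lanti x y : x ≼ y -> y ≼ x -> x = y. Proof. exact: (@vl_antisym _ _ _ _ VL x y). Qed.
Lemma Leq x y x' y' : x = x' -> y = y' -> x ≼ y -> x' ≼ y'.
Proof. by move=> -> ->. Qed.
Lemma LaddR x y z : x ≼ y -> x + z ≼ y + z. Proof. exact: (@vl_add _ _ _ _ VL x y z). Qed.
Lemma LaddL x y z : x ≼ y -> z + x ≼ z + y.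
Proof. by move=> h; rewrite ![z + _]addrC; apply: LaddR. Qed.
Lemma Ladd a b c d : a ≼ b -> c ≼ d -> a + c ≼ b + d.
Proof. by move=> h1 h2; apply: Ltr (LaddR c h1) (LaddL b h2). Qed.
Lemma Lopp a b : a ≼ b -> - b ≼ - a.
Proof.
move=> h; have := LaddR (- a - b) h.
by apply: Leq; [rewrite addrA subrr add0r | rewrite addrC subrK].
Qed.
Lemma Lsub0 a b : a ≼ b -> 0 ≼ b - a.
Proof. by move=> h; have := LaddR (- a) h; apply: Leq; rewrite ?subrr. Qed.
Lemma L0sub a b : 0 ≼ b - a -> a ≼ b.
Proof. by move=> h; have := LaddR a h; apply: Leq; rewrite ?add0r ?subrK. Qed.
Lemma LsubLR a b c : a - b ≼ c -> a ≼ c + b.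
Proof. by move=> h; have := LaddR b h; apply: Leq; rewrite ?subrK. Qed.
Lemma LsubRL a b c : a ≼ b - c -> a + c ≼ b.
Proof. by move=> h; have := LaddR c h; apply: Leq; rewrite ?subrK. Qed.
Lemma LaddRL a b c : a + c ≼ b -> a ≼ b - c.
Proof. by move=> h; have := LaddR (- c) h; apply: Leq; rewrite ?addrK. Qed.
Lemma LaddLR a b c : a ≼ c + b -> a - b ≼ c.
Proof. by move=> h; have := LaddR (- b) h; apply: Leq; rewrite ?addrK. Qed.
Lemma Lge0_add a b : 0 ≼ a -> 0 ≼ b -> 0 ≼ a + b.
Proof. by move=> h1 h2; have := Ladd h1 h2; rewrite addr0. Qed.
Lemma Lle_addr a b : 0 ≼ b -> a ≼ a + b.
Proof. by move=> h; have := LaddL a h; rewrite addr0. Qed.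
Lemma Lle_addl a b : 0 ≼ b -> a ≼ b + a.
Proof. by move=> h; rewrite addrC; apply: Lle_addr. Qed.
Lemma Lsub_le a b : 0 ≼ b -> a - b ≼ a.
Proof. by move=> h; apply: LaddLR; apply: Lle_addr. Qed.

Lemma Jl x y : x ≼ join x y. Proof. exact: (@vl_join_ubl _ _ _ _ VL x y). Qed.
Lemma Jr x y : y ≼ join x y. Proof. exact: (@vl_join_ubr _ _ _ _ VL x y). Qed.
Lemma Jlub x y z : x ≼ z -> y ≼ z -> join x y ≼ z. Proof. exact: (@vl_join_lub _ _ _ _ VL x y z). Qed.
Lemma JC x y : join x y = join y x.
Proof. by apply: Lanti; apply: Jlub; first [exact: Jl | exact: Jr]. Qed.
Lemma Jmono a b a' b' : a ≼ a' -> b ≼ b' -> join a b ≼ join a' b'.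
Proof. move=> h1 h2; apply: Jlub. exact: Ltr h1 (Jl _ _). exact: Ltr h2 (Jr _ _). Qed.
Lemma JD x y z : join (x + z) (y + z) = join x y + z.
Proof.
apply: Lanti.
  by apply: Jlub; apply: LaddR; first [exact: Jl | exact: Jr].
by apply: LsubRL; apply: Jlub; apply: LaddRL; first [exact: Jl | exact: Jr].
Qed.
Lemma Jid x : join x x = x.
Proof. by apply: Lanti; [apply: Jlub; apply: Lrefl | apply: Jl]. Qed.

Lemma Ml x y : meet x y ≼ x.
Proof. rewrite /Defs.meet; apply: Ltr (Lopp (Jl (- x) (- y))) _; rewrite opprK; apply: Lrefl. Qed.
Lemma Mr x y : meet x y ≼ y.
Proof. rewrite /Defs.meet; apply: Ltr (Lopp (Jr (- x) (- y))) _; rewrite opprK; apply: Lrefl. Qed.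
Lemma Mglb x y z : z ≼ x -> z ≼ y -> z ≼ meet x y.
Proof.
move=> h1 h2; rewrite /Defs.meet; rewrite -[z]opprK; apply: Lopp; apply: Jlub; exact: Lopp.
Qed.
Lemma MC x y : meet x y = meet y x.
Proof. by rewrite /Defs.meet JC. Qed.
Lemma Mmono a b a' b' : a ≼ a' -> b ≼ b' -> meet a b ≼ meet a' b'.
Proof. move=> h1 h2; apply: Mglb. exact: Ltr (Ml _ _) h1. exact: Ltr (Mr _ _) h2. Qed.
Lemma MD x y z : meet (x + z) (y + z) = meet x y + z.
Proof. by rewrite /Defs.meet !opprD JD opprD opprK. Qed.
Lemma Mid x : meet x x = x.
Proof. by rewrite /Defs.meet Jid opprK. Qed.
Lemma Mge0 x y : 0 ≼ x -> 0 ≼ y -> 0 ≼ meet x y.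
Proof. exact: Mglb. Qed.
Lemma Jge0r x y : 0 ≼ y -> 0 ≼ join x y.
Proof. by move=> h; apply: Ltr h (Jr _ _). Qed.

Lemma MJ a b : meet a b = a + b - join a b.
Proof.
rewrite /Defs.meet.
have -> : join (- a) (- b) = join b a - (a + b).
  by rewrite -JD; congr join; rewrite opprD addrA; [rewrite addrAC subrr add0r | rewrite subrr add0r].
by rewrite opprB JC.
Qed.
Lemma JMsum a b : a + b = join a b + meet a b.
Proof. by rewrite MJ [join a b + _]addrC subrK. Qed.
Lemma disj_sum a b : meet a b = 0 -> a + b = join a b.
Proof. by move=> h; rewrite JMsum h addr0. Qed.

Lemma sub_meet t c : t - meet t c = join (t - c) 0.
Proof.
rewrite /Defs.meet opprK addrC -JD addrC subrr JC; congr join; by rewrite addrC.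
Qed.
Lemma add_pos a v : a + join (v - a) 0 = join v a.
Proof. by rewrite addrC -JD subrK add0r. Qed.

Lemma half_ge0 a : 0 ≼ a + a -> 0 ≼ a.
Proof.
move=> h; have h2 : (0:R) <= 2^-1 by rewrite invr_ge0 ler0n.
have := @vl_scale _ _ _ _ VL (2^-1) 0 (a + a) h2 h.
apply: Leq; first by rewrite scaler0.
by rewrite -mulr2n -[a *+ 2]scaler_nat scalerA mulVf ?scale1r // pnatr_eq0.
Qed.

Lemma Lscale_nat (n : nat) x y : x ≼ y -> n%:R *: x ≼ n%:R *: y.
Proof. by move=> h; apply: (@vl_scale _ _ _ _ VL _ x y _ h); rewrite ler0n. Qed.
Lemma Lnat_ge0 (n : nat) x : 0 ≼ x -> 0 ≼ n%:R *: x.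
Proof. by move=> h; have := Lscale_nat n h; rewrite scaler0. Qed.
Lemma natS_scale (n : nat) (x : E) : n.+1%:R *: x = n%:R *: x + x.
Proof. by rewrite !scaler_nat mulrSr. Qed.

Lemma Aub x : x ≼ absv x. Proof. exact: Jl. Qed.
Lemma AubN x : - x ≼ absv x. Proof. exact: Jr. Qed.
Lemma Age0 x : 0 ≼ absv x.
Proof. apply: half_ge0; have := Ladd (Aub x) (AubN x); by rewrite subrr. Qed.
Lemma Aid x : 0 ≼ x -> absv x = x.
Proof.
move=> h; apply: Lanti; last exact: Aub.
apply: Jlub; first exact: Lrefl.
apply: Ltr (Lopp h) _; rewrite oppr0; exact: h.
Qed.
Lemma AA x : absv (absv x) = absv x.
Proof. exact/Aid/Age0. Qed.
Lemma AN x : absv (- x) = absv x.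
Proof. by rewrite /Defs.absv opprK JC. Qed.
Lemma Ale x y : x ≼ y -> - x ≼ y -> absv x ≼ y.
Proof. exact: Jlub. Qed.
Lemma Apos_le x y : 0 ≼ x -> x ≼ y -> absv x ≼ absv y.
Proof. by move=> h1 h2; rewrite (Aid h1) (Aid (Ltr h1 h2)). Qed.

Lemma Mriesz a b c : 0 ≼ a -> 0 ≼ b -> 0 ≼ c ->
  meet (a + b) c ≼ meet a c + meet b c.
Proof.
move=> ha hb hc; set t := meet (a + b) c.
have h1 : t - a ≼ meet b c.
  apply: Mglb; first by apply: LaddLR; rewrite addrC; apply: Ml.
  apply: Ltr (Lsub_le _ ha) (Mr _ _).
have m0 : 0 ≼ meet b c by exact: Mge0.
rewrite -MD; apply: Mglb.
  by rewrite addrC; apply: LsubLR.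
apply: Ltr (Mr (a + b) c) _; exact: Lle_addr.
Qed.
Lemma disj_add a b c : 0 ≼ a -> 0 ≼ b -> 0 ≼ c -> meet a c = 0 -> meet b c = 0 ->
  meet (a + b) c = 0.
Proof.
move=> ha hb hc h1 h2; apply: Lanti.
  by have := Mriesz ha hb hc; rewrite h1 h2 addr0.
by apply: Mge0 => //; apply: Lge0_add.
Qed.
Lemma disj_nat (n : nat) a c : 0 ≼ a -> 0 ≼ c -> meet a c = 0 -> meet (n%:R *: a) c = 0.
Proof.
move=> ha hc h; elim: n => [|n IH]; first by rewrite scale0r; apply: Lanti;
  [apply: Ml | apply: Mge0 => //; apply: Lrefl].
by rewrite natS_scale; apply: disj_add => //; apply: Lnat_ge0.
Qed.
Lemma disj_mono a c a' c' : 0 ≼ a' -> 0 ≼ c' -> a' ≼ a -> c' ≼ c -> meet a c = 0 ->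
  meet a' c' = 0.
Proof.
move=> h1 h2 h3 h4 h; apply: Lanti; last exact: Mge0.
by rewrite -h; apply: Mmono.
Qed.
Lemma Arch x y : 0 ≼ x -> (forall n : nat, n%:R *: x ≼ y) -> x = 0.
Proof. exact: (@vl_archimedean _ _ _ _ VL x y). Qed.


Local Notation solid := (solid le join).
Local Notation disj_compl := (disj_compl join).
Local Notation uoconv := (uoconv le join).
Local Notation oconv := (oconv le join).

Lemma solid_pos V x y : solid V -> V y -> 0 ≼ x -> x ≼ absv y -> V x.
Proof. by move=> sV Vy x0 h; apply: sV Vy _; rewrite Aid. Qed.
Lemma solid_opp V x : solid V -> V x -> V (- x).
Proof. by move=> sV Vx; apply: sV Vx _; rewrite AN; apply: Lrefl. Qed.

Definition nseq (V : nat -> set E) :=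
  (forall n, nbhs (0:E) (V n) /\ solid (V n)) /\ normal_seq V.

Lemma nseq0 V n : nseq V -> V n 0.
Proof. by move=> [h _]; apply: nbhs_singleton; exact: (h n).1. Qed.
Lemma nseq_dec V n : nseq V -> V n.+1 `<=` V n.
Proof. by move=> hV u Vu; rewrite -[u]addr0; apply: hV.2 => //; apply: nseq0. Qed.
Lemma nseq_decle V n m : nseq V -> (n <= m)%N -> V m `<=` V n.
Proof.
move=> hV; elim: m => [|m IH]; first by rewrite leqn0 => /eqP ->.
rewrite leq_eqVlt => /orP [/eqP -> //|]; rewrite ltnS => /IH h u /(nseq_dec hV); exact: h.
Qed.

Lemma directed_natle : directed natle.
Proof.
split; first by exists 0%N.
split; first by move=> a; exact: leqnn.
split; first by move=> a b c; exact: leq_trans.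
by move=> a b; exists (maxn a b); split; [exact: leq_maxl | exact: leq_maxr].
Qed.

Fixpoint fj (a : nat -> E) (m k : nat) : E :=
  if k is k'.+1 then join (a m) (fj a m.+1 k') else a m.

Lemma fj_ge0 a : (forall n, 0 ≼ a n) -> forall k m, 0 ≼ fj a m k.
Proof. by move=> h; elim=> [|k IH] m //=; apply: Jge0r. Qed.

Lemma fj_ub a : forall k m n, (m <= n)%N -> (n <= m + k)%N -> a n ≼ fj a m k.
Proof.
elim=> [|k IH] m n /=.
  move=> h1 h2; have -> : n = m by apply/eqP; rewrite eqn_leq h1; rewrite addn0 in h2; rewrite h2.
  exact: Lrefl.
rewrite leq_eqVlt => /orP [/eqP -> _|h1 h2]; first exact: Jl.
apply: Ltr (Jr _ _); apply: IH => //; by rewrite addSnnS.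
Qed.

Lemma fj_mono1 a : forall k m, fj a m k ≼ fj a m k.+1.
Proof.
elim=> [|k IH] m /=; first exact: Jl.
by apply: Jmono; [apply: Lrefl | apply: IH].
Qed.
Lemma fj_mono a m k k' : (k <= k')%N -> fj a m k ≼ fj a m k'.
Proof.
elim: k' => [|k' IH]; first by rewrite leqn0 => /eqP ->; apply: Lrefl.
rewrite leq_eqVlt => /orP [/eqP -> |]; first exact: Lrefl.
by rewrite ltnS => /IH h; apply: Ltr h (fj_mono1 _ _ _).
Qed.

Lemma fj_in W a : nseq W -> (forall n, 0 ≼ a n) -> (forall n, W n (a n)) ->
  forall k m, W m (fj a m.+1 k).
Proof.
move=> hW a0 aW; elim=> [|k IH] m /=; first exact: nseq_dec (aW _).
apply: (solid_pos ((hW.1 m).2) (hW.2 _ _ _ (aW m.+1) (IH m.+1))).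
  by apply: Jge0r; apply: fj_ge0.
rewrite Aid; last by apply: Lge0_add => //; apply: fj_ge0.
by apply: Jlub; [apply: Lle_addr; apply: fj_ge0 | apply: Lle_addl].
Qed.

Lemma core (uoL : uo_Lebesgue le join) (W : nat -> set E) (z : nat -> E) (z0 : E) :
  nseq W -> (forall n, W n (z n - z0)) ->
  (forall n, disj_compl (\bigcap_j W j) (z n - z0)) ->
  uoconv natle z z0.
Proof.
move=> hW Wz Wd w.
set a := fun n => meet (absv (z n - z0)) (absv w).
have a0 n : 0 ≼ a n by apply: Mge0; apply: Age0.
have aw n : a n ≼ absv w by apply: Mr.
have aW n : W n (a n).
  by apply: (solid_pos ((hW.1 n).2) (Wz n) (a0 n)); apply: Ml.
have ad n p : (\bigcap_j W j) p -> meet (a n) (absv p) = 0.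
  move=> Np; apply: (disj_mono (a0 n) (Age0 p) (Ml _ _) (Lrefl _)).
  exact: Wd n p Np.
pose D := fun u => exists m, forall n, (m <= n)%N -> a n ≼ u.
have Dw : D (absv w) by exists 0%N.
have key : forall v, 0 ≼ v -> (forall u, D u -> v ≼ u) -> v = 0.
{ move=> v v0 vD.
  have vdisj : forall p, (\bigcap_j W j) p -> meet v (absv p) = 0.
  { move=> p Np; set q := meet v (absv p).
    have q0 : 0 ≼ q by apply: Mge0 v0 (Age0 p).
    apply: (Arch q0 (y := absv w)) => k; elim: k => [|k IH].
      by rewrite scale0r; apply: Age0.
    have Dk : D (absv w - k%:R *: q).
      exists 0%N => n _; apply: LaddRL.
      rewrite disj_sum.
        by apply: Jlub; [exact: aw | exact: IH].
      apply: (disj_mono (a0 n) (Lnat_ge0 k q0) (Lrefl _) (Lscale_nat k (Mr v (absv p)))).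
      rewrite MC; apply: disj_nat => //; [exact: Age0 | by rewrite MC; apply: ad].
    rewrite natS_scale addrC; apply: LsubRL; exact: Ltr (Ml _ _) (vD _ Dk). }
  have vN : (\bigcap_j W j) v.
  { move=> j _.
    pose m := j.+2.
    pose dk := fun k => join (v - fj a m k) 0.
    have dk0 k : 0 ≼ dk k by apply: Jr.
    have dkdec k k' : (k <= k')%N -> dk k' ≼ dk k.
      by move=> h; apply: Jmono; [apply: LaddL; apply: Lopp; apply: fj_mono | apply: Lrefl].
    have dkinf : forall e, 0 ≼ e -> (forall k, e ≼ dk k) -> e = 0.
    { move=> e e0 he.
      have Dsh : forall t, D t -> D (t - e).
      { move=> t [mt ht]; exists (maxn mt m) => n hn.
        apply: LaddRL.
        apply: Ltr (LaddL (a n) (he (n - m)%N)) _.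
        have hmn : (m <= n)%N by apply: leq_trans hn; apply: leq_maxr.
        apply: Ltr (LaddL (a n) (Jmono (LaddL v (Lopp (fj_ub a hmn _))) (Lrefl 0))) _.
          by rewrite subnKC.
        rewrite add_pos; apply: Jlub; first by apply: vD; exists mt.
        by apply: ht; apply: leq_trans hn; apply: leq_maxl. }
      have Dk : forall k, D (absv w - k%:R *: e).
        elim=> [|k IH]; first by rewrite scale0r subr0.
        by rewrite natS_scale opprD addrA; apply: Dsh.
      apply: (Arch e0 (y := absv w - v)) => k.
      apply: LaddRL; rewrite addrC; apply: LsubRL; exact: vD. }
    have dconv : tconv natle dk 0.
    { apply: uoL.2; first exact: directed_natle.
      move=> w'; exists nat, natle, dk; split; first exact: directed_natle.
      split; first by move=> b1 b2; apply: dkdec.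
      split.
      - split; first by move=> _ [k _ <-]; apply: dk0.
        move=> u hu.
        have e0 := dkinf (join u 0) (Jr _ _) (fun k => Jlub (hu _ (ex_intro2 _ _ k I erefl)) (dk0 k)).
        by rewrite -e0; apply: Jl.
      - move=> b0; exists b0 => k hk; rewrite subr0 Aid; last by apply: Mge0; apply: Age0.
        by apply: Ltr (Ml _ _) _; rewrite subr0 Aid //; apply: dkdec. }
    have [k0 hk0] := dconv _ ((hW.1 j.+1).1).
    have dW := hk0 k0 (leqnn k0).
    have fW : W j.+1 (fj a m k0) by apply: (fj_in hW a0 aW).
    have vle : v ≼ fj a m k0 + dk k0.
      by rewrite addrC; apply: LsubLR; apply: Jl.
    apply: (solid_pos ((hW.1 j).2) (hW.2 _ _ _ fW dW) v0).
    rewrite Aid //; apply: Lge0_add => //; exact: fj_ge0. }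
  by have := vdisj v vN; rewrite Aid // Mid. }
have Dmeet u1 u2 : D u1 -> D u2 -> D (meet u1 u2).
  move=> [m1 h1] [m2 h2]; exists (maxn m1 m2) => n hn; apply: Mglb.
    by apply: h1; apply: leq_trans hn; apply: leq_maxl.
  by apply: h2; apply: leq_trans hn; apply: leq_maxr.
exists {u : E | D u}, (fun b1 b2 : {u : E | D u} => proj1_sig b2 ≼ proj1_sig b1),
  (fun b : {u : E | D u} => proj1_sig b).
split.
  split; first by exists (exist _ _ Dw).
  split; first by move=> b; apply: Lrefl.
  split; first by move=> b1 b2 b3 h1 h2; apply: Ltr h2 h1.
  move=> [u1 D1] [u2 D2]; exists (exist _ _ (Dmeet _ _ D1 D2)); split; [exact: Ml | exact: Mr].
split; first by [].
split.
  split; first by move=> _ [[u [m hm]] _ <-]; apply: Ltr (a0 m) (hm m (leqnn m)).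
  move=> u hu.
  have e0 := key (join u 0) (Jr _ _) (fun t Dt => Jlub (hu _ (ex_intro2 _ _ (exist _ t Dt) I erefl)) (Ltr (a0 _) (projT2 (cid Dt) _ (leqnn _)))).
  by rewrite -e0; apply: Jl.
move=> [u [m hm]]; exists m => n hn; rewrite subr0 Aid; first exact: hm.
exact: a0.
Qed.

Lemma shift_nbhs (U : set E) (x0 : E) : nbhs 0 U -> nbhs x0 [set e | U (e - x0)].
Proof.
move=> hU; have := nbhsT_subproof (@add_continuous E) x0 hU.
apply: filterS => _ [u Uu <-] /=; by rewrite addrAC subrr add0r.
Qed.

Lemma diag (V G : nat -> nat -> set E) :
  (forall i, nseq (V i)) -> (forall j, G 0%N j = setT) ->
  (forall n j, G n.+1 j = G n j `&` V n j) ->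
  nseq (fun j => G j j) /\ (forall i, \bigcap_j G j j `<=` \bigcap_j V i j).
Proof.
move=> hV G0 GS.
have Gn : forall n, nseq (G n).
  elim=> [|n [IH1 IH2]].
    split; last by move=> j u v; rewrite !G0.
    by move=> j; rewrite G0; split; [exact: filterT | by []].
  split.
    move=> j; rewrite GS; split; first exact: filterI (IH1 j).1 ((hV n).1 j).1.
    move=> u v [h1 h2] hle; split; [exact: (IH1 j).2 _ _ h1 hle | exact: ((hV n).1 j).2 _ _ h2 hle].
  move=> j u v; rewrite !GS => -[h1 h2] [h3 h4]; split; [exact: IH2 | exact: (hV n).2].
have Gdec : forall n n' j, (n <= n')%N -> G n' j `<=` G n j.
  move=> n n' j; elim: n' => [|n' IH]; first by rewrite leqn0 => /eqP ->.
  rewrite leq_eqVlt => /orP [/eqP -> //|]; rewrite ltnS => /IH h u.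
  by rewrite GS => -[/h].
split.
  split; first by move=> j; exact: (Gn j).1 j.
  move=> j u v h1 h2; apply: (Gdec j j.+1 j (leqnSn j)); exact: (Gn j.+1).2.
move=> i p Np j _.
have h := Np (maxn i j).+1 I.
have : G i.+1 (maxn i j).+1 p by apply: Gdec h; rewrite ltnS leq_maxl.
rewrite GS => -[_ hv].
apply: (nseq_decle (hV i) _ hv); apply: leq_trans (leq_maxr i j) (leqnSn _).
Qed.

Lemma disj_anti (N N' : set E) y : N `<=` N' -> disj_compl N' y -> disj_compl N y.
Proof. by move=> h hy p Np; apply: hy; apply: h. Qed.

Lemma embed (uoL : uo_Lebesgue le join) (Hc : carrier le join = setT)
  (A : Type) (ra : A -> A -> Prop) (x : A -> E) (x0 : E) :
  directed ra -> tconv ra x x0 ->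
  exists s : nat -> A, embedded ra s /\ uoconv natle (fun n => x (s n)) x0.
Proof.
move=> [[a0 _] [rrefl [rtr rup]]] hx.
have Vof : forall y : E, {V | nseq V /\ disj_compl (\bigcap_j V j) y}.
  move=> y; apply: cid; have : carrier le join y by rewrite Hc.
  by case=> V [h1 [h2 h3]]; exists V.
have nxt : forall (al : A) (U : set E), {be : A | nbhs 0 U -> ra al be /\
    ((~ exists a, forall b, ra b a) -> ~ ra be al) /\ forall g, ra be g -> U (x g - x0)}.
  move=> al U; apply: cid; case: (pselect (nbhs 0 U)) => hU; last by exists al.
  have [a1 ha1] := hx _ (shift_nbhs x0 hU).
  case: (pselect (exists a, forall b, ra b a)) => hl.
    have [c [c1 c2]] := rup al a1; exists c => _; split => //; split => //.
    by move=> g hg; apply: ha1; apply: rtr c2 hg.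
  have [b hb] : exists b, ~ ra b al.
    by apply: Classical_Prop.NNPP => hn; apply: hl; exists al => b;
       apply: Classical_Prop.NNPP => nb; apply: hn; exists b.
  have [c [c1 c2]] := rup al a1; have [d [d1 d2]] := rup c b.
  exists d => _; split; first exact: rtr c1 d1.
  split; first by move=> _ hd; apply: hb; exact: (rtr _ _ _ d2 hd).
  by move=> g hg; apply: ha1; apply: (rtr _ _ _ c2 (rtr _ _ _ d1 hg)).
pose st := fix st n := match n with
  | 0%N => (a0, fun _ : nat => [set: E])
  | n'.+1 => let G' := fun j => (st n').2 j `&` proj1_sig (Vof (x (st n').1 - x0)) j in
             (proj1_sig (nxt (st n').1 (G' n'.+1)), G') end.
pose s n := (st n).1.
pose G n := (st n).2.
pose V i := proj1_sig (Vof (x (s i) - x0)).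
have GS n j : G n.+1 j = G n j `&` V n j by [].
have [hWn hWi] := diag (V := V) (G := G) (fun i => (proj2_sig (Vof _)).1) (fun j => erefl) GS.
have spec n := proj2_sig (nxt (s n) (G n.+1 n.+1)) ((hWn.1 n.+1).1).
exists s; split.
  by split; [move=> n; exact: (spec n).1 | move=> hl n; exact: (spec n).2.1 hl].
apply: (core uoL hWn).
  by case => [|n]; [by [] | exact: (spec n).2.2 _ (rrefl _)].
move=> n; apply: (disj_anti (hWi n)); exact: (proj2_sig (Vof _)).2.
Qed.

Lemma half_nbhs (U : set E) : nbhs (0:E) U ->
  exists H, nbhs (0:E) H /\ forall a b, H a -> H b -> U (a + b).
Proof.
move=> hU; have /= := @add_continuous E (0, 0) U; rewrite addr0 => /(_ hU) [B] [B1 B2] BU.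
exists (B.1 `&` B.2); split; first exact: filterI.
by move=> a b [ha _] [_ hb]; exact: (BU (a, b)).
Qed.

Lemma normal_from (ls : locally_solid le join) (U : set E) : nbhs 0 U ->
  exists V, nseq V /\ V 0%N `<=` U.
Proof.
move=> hU.
have sol : forall U : set E, {S | nbhs 0 U -> nbhs 0 S /\ solid S /\ S `<=` U}.
  move=> U'; apply: cid; case: (pselect (nbhs 0 U')) => h; last by exists U'.
  by have [S hS] := ls _ h; exists S.
have hf : forall U : set E, {H | nbhs 0 U -> nbhs 0 H /\ solid H /\
    forall a b, H a -> H b -> U (a + b)}.
  move=> U'; apply: cid; case: (pselect (nbhs 0 U')) => h; last by exists U'.
  have [H [H1 H2]] := half_nbhs h.
  have [S1 [S2 S3]] := proj2_sig (sol H) H1.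
  exists (proj1_sig (sol H)) => _; split => //; split => // a b ha hb.
  by apply: H2; apply: S3.
pose V := fix V n := match n with
  | 0%N => proj1_sig (sol U)
  | n'.+1 => proj1_sig (hf (V n')) end.
have Vn : forall n, nbhs 0 (V n) /\ solid (V n).
  elim=> [|n [IH1 IH2]]; first by have [h1 [h2 _]] := proj2_sig (sol U) hU.
  by have [h1 [h2 _]] := proj2_sig (hf (V n)) IH1.
exists V; split; last by have [_ [_ h3]] := proj2_sig (sol U) hU.
split => // n u v hu hv.
by have [_ [_ h3]] := proj2_sig (hf (V n)) (Vn n).1; apply: h3.
Qed.

Lemma Ladd_le0 a b : a + b ≼ a -> b ≼ 0.
Proof. by move=> h; have := LaddL (- a) h; rewrite addKr addNr. Qed.

Lemma bandN (uoL : uo_Lebesgue le join) V r : nseq V -> 0 ≼ r ->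
  (forall p, disj_compl (\bigcap_j V j) p -> meet r (absv p) = 0) ->
  (\bigcap_j V j) r.
Proof.
move=> hV r0 hr.
set N := \bigcap_j V j.
have N0 : N 0 by move=> j _; apply: nseq0.
have Nadd a b : N a -> N b -> N (a + b).
  by move=> ha hb j _; apply: hV.2; [apply: ha | apply: hb].
have Nsol : solid N by move=> a b hb hab j _; apply: ((hV.1 j).2) (hb j I) hab.
have Nnat k q : N q -> N (k%:R *: q).
  move=> hq; elim: k => [|k IH]; first by rewrite scale0r.
  by rewrite natS_scale; apply: Nadd.
pose I := {n : E | N n /\ 0 ≼ n /\ n ≼ r}.
pose mkI := fun n (h : N n /\ 0 ≼ n /\ n ≼ r) => exist (fun n => N n /\ 0 ≼ n /\ n ≼ r) n h : I.
pose ra := fun i1 i2 : I => proj1_sig i1 ≼ proj1_sig i2.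
have i0 : N 0 /\ 0 ≼ 0 /\ 0 ≼ r by split => //; split => //; apply: Lrefl.
have dirI : directed ra.
  split; first by exists (mkI _ i0).
  split; first by move=> i; apply: Lrefl.
  split; first by move=> i1 i2 i3; apply: Ltr.
  move=> [n1 [h1 [h2 h3]]] [n2 [h4 [h5 h6]]].
  have hj : N (join n1 n2) /\ 0 ≼ join n1 n2 /\ join n1 n2 ≼ r.
    split; last by split; [apply: Jge0r | apply: Jlub].
    apply: (Nsol _ _ (Nadd _ _ h1 h4)); rewrite !Aid; first by apply: Jlub;
      [apply: Lle_addr | apply: Lle_addl].
    by apply: Lge0_add. by apply: Jge0r.
  by exists (mkI _ hj); split; [apply: Jl | apply: Jr].
have conv : tconv ra (fun i : I => proj1_sig i) r.
  apply: uoL.2 => // w.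
  exists I, ra, (fun i : I => r - proj1_sig i); split => //.
  split; first by move=> i1 i2 h; apply: LaddL; apply: Lopp.
  split.
    split; first by move=> _ [[n [h1 [h2 h3]]] _ <-]; apply: Lsub0.
    move=> u hu; set e := join u 0.
    have he : forall i : I, e ≼ r - proj1_sig i.
      move=> i; apply: Jlub; first by apply: hu; exists i.
      by case: i => n [h1 [h2 h3]]; apply: Lsub0.
    have e0 : 0 ≼ e by apply: Jr.
    have er : e ≼ r by have := he (mkI _ i0); rewrite subr0.
    suff e_0 : e = 0 by rewrite -e_0; apply: Jl.
    have eNd : disj_compl N e.
      move=> p Np; rewrite Aid //; set q := meet e (absv p).
      have q0 : 0 ≼ q by apply: Mge0 => //; apply: Age0.
      have qN : N q by apply: (Nsol _ _ Np); rewrite Aid //; apply: Mr.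
      apply: (Arch q0 (y := r)) => k; elim: k => [|k IH]; first by rewrite scale0r.
      have hk : N (k%:R *: q) /\ 0 ≼ k%:R *: q /\ k%:R *: q ≼ r.
        by split; [apply: Nnat | split; [apply: Lnat_ge0 | ]].
      have := he (mkI _ hk) => /= h.
      rewrite natS_scale addrC; apply: LsubRL; exact: Ltr (Ml _ _) h.
    have eNdd : meet e (absv e) = 0.
      apply: (disj_mono e0 (Age0 e) er (Lrefl _)).
      by apply: hr.
    by move: eNdd; rewrite Aid // Mid.
  move=> b0; exists b0 => i hi; rewrite subr0 Aid; last by apply: Mge0; apply: Age0.
  apply: Ltr (Ml _ _) _; rewrite -opprB AN Aid; last by case: i hi => n [? [? ?]] _; apply: Lsub0.
  by apply: LaddL; apply: Lopp.
move=> j _.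
have [i1 hi0] := conv _ (shift_nbhs r ((hV.1 j.+1).1)).
have := hi0 i1 (Lrefl _); case: i1 {hi0} => n0 [h1 [h2 h3]] /= h.
have h' : V j.+1 (r - n0) by rewrite -opprB; apply: solid_opp => //; exact: (hV.1 j.+1).2.
by rewrite -[r](subrK n0); apply: hV.2 => //; apply: h1.
Qed.

Lemma carrier_nat (k : nat) u : carrier le join u -> 0 ≼ u -> carrier le join (k%:R *: u).
Proof.
move=> [V [h1 [h2 h3]]] u0; exists V; split => //; split => // p Np.
rewrite Aid; last exact: Lnat_ge0.
apply: disj_nat => //; first exact: Age0.
by have := h3 p Np; rewrite Aid.
Qed.

Lemma dense (hs : hausdorff_space E) (ls : locally_solid le join)
  (uoL : uo_Lebesgue le join) r : 0 ≼ r -> r <> 0 ->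
  exists u, carrier le join u /\ 0 ≼ u /\ u ≼ r /\ u <> 0.
Proof.
move=> r0 rn0.
have [U [hU Ur]] : exists U, nbhs (0:E) U /\ ~ U r.
  apply: NNPP => hn; apply: rn0; apply/esym; apply: hs => A B hA hB.
  exists r; split; last exact: nbhs_singleton.
  by apply: NNPP => nA; apply: hn; exists A.
have [V [hV V0]] := normal_from ls hU.
apply: NNPP => hno; apply: Ur; apply: V0.
suff hb : (\bigcap_j V j) r by exact: hb 0%N I.
apply: (bandN uoL hV r0) => p hp; apply: NNPP => hne; apply: hno.
exists (meet r (absv p)); split.
  exists V; split; first exact: hV.1.
  split; first exact: hV.2.
  move=> z Nz; rewrite Aid; last by apply: Mge0 => //; apply: Age0.
  apply: (disj_mono (Mge0 r0 (Age0 _)) (Age0 _) (Mr _ _) (Lrefl _)).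
  by have := hp z Nz.
split; first by apply: Mge0 => //; apply: Age0.
by split; [apply: Ml | ].
Qed.

Lemma csp_carrier (hs : hausdorff_space E) (ls : locally_solid le join)
  (uoL : uo_Lebesgue le join) :
  countable_sup_property le -> carrier le join = setT.
Proof.
move=> csp; apply/seteqP; split=> // y _.
suff : carrier le join (absv y).
  by move=> [V [h1 [h2 h3]]]; exists V; split => //; split => // p Np; rewrite -AA; apply: h3.
set x := absv y; have x0 : 0 ≼ x by apply: Age0.
pose S := [set u | carrier le join u /\ 0 ≼ u /\ u ≼ x].
have supS : is_sup le S x.
  split; first by move=> u [_ [_ h]].
  move=> z hz; set z' := meet z x.
  have z'S : forall u, S u -> u ≼ z'.
    by move=> u Su; apply: Mglb; [apply: hz | case: Su => _ [_ h]].
  case: (pselect (x - z' = 0)) => hr.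
    by have := subr0_eq hr => ->; apply: Ml.
  have r0 : 0 ≼ x - z' by apply: Lsub0; apply: Mr.
  have [u [Cu [u0 [ur un0]]]] := dense hs ls uoL r0 hr.
  exfalso; apply: un0; apply: (Arch u0 (y := x)) => k; elim: k => [|k IH].
    by rewrite scale0r.
  have hk : S (k%:R *: u) by split; [apply: carrier_nat | split; [apply: Lnat_ge0|]].
  rewrite natS_scale; have := Ladd (z'S _ hk) ur.
  by rewrite [z' + _]addrC subrK.
have [T [TS [cT supT]]] := csp S x supS.
have [f finj] := countable_injP _ cT.
have Vof : forall t : E, {V | nseq V /\ (carrier le join t -> disj_compl (\bigcap_j V j) t)}.
  move=> t; apply: cid; case: (pselect (carrier le join t)) => [[V [h1 [h2 h3]]]|hn].
    by exists V.
  exists (fun _ => setT); split => //; split => //.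
  by move=> n; split; [exact: filterT|].
have tof : forall i : nat, {t | (exists t, T t /\ f t = i) -> T t /\ f t = i}.
  move=> i; apply: cid; case: (pselect (exists t, T t /\ f t = i)) => [[t ht]|hn].
    by exists t.
  by exists 0.
pose Vi i := proj1_sig (Vof (proj1_sig (tof i))).
pose G := fix G n := match n with
  | 0%N => fun _ : nat => [set: E]
  | n'.+1 => fun j => G n' j `&` Vi n' j end.
have [hW hWi] := diag (V := Vi) (G := G) (fun i => (proj2_sig (Vof _)).1) (fun j => erefl)
  (fun n j => erefl).
have Td : forall t, T t -> disj_compl (\bigcap_j G j j) t.
  move=> t Tt.
  have [Tt' ft'] := proj2_sig (tof (f t)) (ex_intro _ t (conj Tt erefl)).
  have ht : proj1_sig (tof (f t)) = t.
    by apply: finj => //; rewrite inE.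
  have Ct : carrier le join (proj1_sig (tof (f t))) by rewrite ht; case: (TS _ Tt).
  have h := (proj2_sig (Vof (proj1_sig (tof (f t))))).2 Ct.
  rewrite -ht; exact: (disj_anti (hWi (f t)) h).
exists (fun j => G j j); split; first exact: hW.1.
split; first exact: hW.2.
move=> p Np; rewrite /x AA -/x; set m := meet x (absv p).
have m0 : 0 ≼ m by apply: Mge0 => //; apply: Age0.
apply: Lanti => //.
have ub : forall t, T t -> t ≼ x - m.
  move=> t Tt; have [_ [t0 tx]] := TS _ Tt.
  have htc : meet t (absv p) = 0 by have := Td t Tt p Np; rewrite Aid.
  rewrite /m sub_meet -[t]subr0 -htc sub_meet.
  by apply: Jmono; [apply: LaddR | apply: Mge0 => //; apply: Age0].
have := supT.2 _ ub => h.
by apply: (@Ladd_le0 x); apply: LsubRL.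
Qed.
End Lat.
Unset Implicit Arguments.

Theorem theorem5p8 (R : realType) (E : topologicalLmodType R)
    (le : E -> E -> Prop) (join : E -> E -> E) :
  hausdorff_space E ->
  vector_lattice le join ->
  uo_Lebesgue le join ->
  (carrier le join = setT \/ countable_sup_property le) ->
  (forall (A : Type) (ra : A -> A -> Prop) (x : A -> E) (x0 : E),
      directed ra -> tconv ra x x0 ->
      exists s : nat -> A, embedded ra s /\
        uoconv le join natle (fun n => x (s n)) x0 /\
        tconv natle (fun n => x (s n)) x0) /\
  (forall (x : nat -> E) (x0 : E),
      tconv natle x x0 <->
      (forall phi, strict_incr phi -> exists psi, strict_incr psi /\
         uoconv le join natle (fun n => x (phi (psi n))) x0)).
Proof.
move=> hs VL uoL hC.
have Hc : carrier le join = setT.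
  by case: hC => // /(csp_carrier VL hs uoL.1 uoL).
split.
  move=> A ra x x0 hd hx; have [s [es hu]] := embed VL uoL Hc hd hx.
  exists s; split => //; split => //; exact: uoL.2 _ _ _ _ directed_natle hu.
move=> x x0; split.
  move=> hx phi hphi.
  have phige : forall n, (n <= phi n)%N.
    by elim => [|n IH] //; apply: leq_ltn_trans IH (hphi n).
  have hxs : tconv natle (fun n => x (phi n)) x0.
    move=> U hU; have [a0 ha0] := hx U hU; exists a0 => n hn; apply: ha0.
    exact: leq_trans hn (phige n).
  have [s [[es1 es2] hu]] := embed VL uoL Hc directed_natle hxs.
  exists s; split => // n.
  have nl : ~ exists a, forall b, natle b a.
    by move=> [a ha]; have := ha a.+1; rewrite /natle ltnn.
  have := es2 nl n; rewrite /natle => hh; rewrite ltnNge; exact/negP.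
move=> h; apply: NNPP => hn.
have [U [hU hnot]] : exists U, nbhs x0 U /\ forall a0, exists a, (a0 <= a)%N /\ ~ U (x a).
  apply: NNPP => h1; apply: hn => U hU; apply: NNPP => h2; apply: h1; exists U; split => // a0.
  apply: NNPP => h3; apply: h2; exists a0 => a ha; apply: NNPP => h4; apply: h3; exists a.
  by split.
have g : forall a0, {a | (a0 <= a)%N /\ ~ U (x a)} := fun a0 => cid (hnot a0).
pose phi := fix phi n := match n with
  | 0%N => proj1_sig (g 0%N)
  | n'.+1 => proj1_sig (g (phi n').+1) end.
have hphi : strict_incr phi by move=> n /=; exact: (proj2_sig (g _)).1.
have phiU : forall n, ~ U (x (phi n)) by case => [|n] /=; exact: (proj2_sig (g _)).2.
have [psi [_ hu]] := h phi hphi.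
have [a0 ha0] := uoL.2 _ _ _ _ directed_natle hu U hU.
by apply: (phiU (psi a0)); apply: ha0; exact: leqnn.
Qed.
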